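(* There are universal constants $C,c>0$ such that the following holds. Let $p\in(0,1/2]$, let $y=(y_1,\dots,y_n)\in\mathbb{R}^n$, and let $L>0$, $\lambda\in\mathbb{R}$ be such that, for independent Bernoulli($p$) random variables $b_1,\dots,b_n$, $\mathbb{P}\{|\sum_{i=1}^nb_iy_i-\lambda|\leq t\}\leq Lt$ for all $t\geq\sqrt n$. Then there exists $y'=(y'_1,\dots,y'_n)\in\mathbb{Z}^n$ such that: (i) $\|y-y'\|_\infty\leq1$; (ii) $\mathbb{P}\{|\sum_{i=1}^nb_iy'_i-\lambda|\leq t\}\leq C\,Lt$ for all $t\geq\sqrt n$; (iii) $\mathcal L(\sum_{i=1}^nb_iy'_i,\sqrt n)\geq c\,\mathcal L(\sum_{i=1}^nb_iy_i,\sqrt n)$; (iv) $|\sum_{i=1}^ny_i-\sum_{i=1}^ny'_i|\leq C\sqrt n$.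
   Context: A Bernoulli($p$) random variable takes value $1$ with probability $p$ and $0$ with probability $1-p$. The Lévy concentration function is $\mathcal L(\xi,t)=\sup_{\lambda\in\mathbb{R}}\mathbb{P}\{|\xi-\lambda|\leq t\}$. *)

(* Defs.v *)
From HB Require Import structures.
From mathcomp Require Import all_boot all_order all_algebra.
From mathcomp Require Import boolp classical_sets reals.
From mathcomp Require Export Rstruct.
Set Implicit Arguments. Unset Strict Implicit. Unset Printing Implicit Defensive.
Import Order.TTheory GRing.Theory Num.Theory.
Local Open Scope ring_scope.
Local Open Scope classical_set_scope.

Section Defs.
Variable R : realType.

Definition bern_weight (p : R) (n : nat) (b : {ffun 'I_n -> bool}) : R :=
  \prod_(i < n) (if b i then p else 1 - p).

Definition rsum (n : nat) (y : 'I_n -> R) (b : {ffun 'I_n -> bool}) : R :=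
  \sum_(i < n) (b i)%:R * y i.

Definition prob_close (p : R) (n : nat) (y : 'I_n -> R) (lam t : R) : R :=
  \sum_(b : {ffun 'I_n -> bool} | `|rsum y b - lam| <= t) bern_weight p b.

Definition levy (p : R) (n : nat) (y : 'I_n -> R) (t : R) : R :=
  sup [set prob_close p y lam t | lam in [set: R]].
End Defs.

(* Main.v *)
Require Import Defs.
From HB Require Import structures.
From mathcomp Require Import all_boot all_order all_algebra.
From mathcomp Require Import boolp classical_sets reals Rstruct.
From mathcomp Require Import sequences exp lra ring.
Import Order.TTheory GRing.Theory Num.Theory.
Local Open Scope ring_scope.

Set Implicit Arguments. Unset Strict Implicit. Unset Printing Implicit Defensive.
Local Notation R := Rdefinitions.R.

Definition pw n (q : 'I_n -> R) (e : {ffun 'I_n -> bool}) : R :=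
  \prod_(i < n) (if e i then q i else 1 - q i).

Lemma pw_ge0 n (q : 'I_n -> R) e : (forall i, 0 <= q i <= 1) -> 0 <= pw q e.
Proof.
move=> hq; apply: prodr_ge0 => i _; have := hq i; case: (e i) => /andP[h1 h2]; lra.
Qed.

Lemma pw_fact n (q : 'I_n -> R) (g : 'I_n -> bool -> R) :
  \sum_e pw q e * \prod_i g i (e i) = \prod_i (q i * g i true + (1 - q i) * g i false).
Proof.
have -> : \prod_i (q i * g i true + (1 - q i) * g i false) =
  \prod_i \sum_(x : bool) ((if x then q i else 1 - q i) * g i x).
  by apply: eq_bigr => i _; rewrite big_bool.
rewrite bigA_distr_bigA; apply: eq_bigr => e _.
by rewrite /pw -big_split /=; apply: eq_bigr => i _; case: (e i).
Qed.

Lemma pw_sum1 n (q : 'I_n -> R) : \sum_e pw q e = 1.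
Proof.
have h := pw_fact q (fun _ _ => 1); rewrite /= in h.
transitivity (\sum_e pw q e * \prod_(i < n) (1:R)).
  by apply: eq_bigr => e _; rewrite big1_eq mulr1.
rewrite h; apply: big1 => i _; rewrite !mulr1; lra.
Qed.

Lemma expR_le_quad (x : R) : `|x| <= 2^-1 -> expR x <= 1 + x + 2 * x ^+ 2.
Proof.
move=> hx.
have hx' : -(2^-1) <= x <= 2^-1 by rewrite -ler_norml.
case/andP: hx' => h1 h2.
have hpos : 0 < 1 - x by lra.
have e1 : 1 - x <= expR (- x) by have := expR_ge1Dx (- x); lra.
have : expR x <= (1 - x)^-1.
  rewrite -[expR x]invrK -expRN.
  by rewrite lef_pV2 // ?posrE ?expR_gt0.
move=> /le_trans; apply.
rewrite -[(1 - x)^-1]mul1r ler_pdivrMr //.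
have : 0 <= x ^+ 2 * (1 - 2 * x) by apply: mulr_ge0; [exact: sqr_ge0 | lra].
rewrite expr2; nra.
Qed.

Definition dd n (q : 'I_n -> R) (e : {ffun 'I_n -> bool}) (i : 'I_n) : R :=
  if e i then q i - 1 else q i.
Definition DD n (q : 'I_n -> R) (b e : {ffun 'I_n -> bool}) : R :=
  \sum_(i < n) (b i)%:R * dd q e i.

Lemma expR_ge1 (x : R) : 0 <= x -> 1 <= expR x.
Proof. by move=> hx; rewrite -expR0 ler_expR. Qed.

Lemma factor_bound (q s : R) : 0 <= q <= 1 -> `|s| <= 2^-1 ->
  q * expR (s * (q - 1)) + (1 - q) * expR (s * q) <= expR (2 * s ^+ 2).
Proof.
move=> /andP[q0 q1] hs.
have hs' : -(2^-1) <= s <= 2^-1 by rewrite -ler_norml.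
case/andP: hs' => s1 s2.
have a1 : `|s * (q - 1)| <= 2^-1.
  rewrite normrM; apply: le_trans (_ : `|s| * 1 <= _); last by rewrite mulr1.
  apply: ler_wpM2l => //; rewrite ler_norml; lra.
have a2 : `|s * q| <= 2^-1.
  rewrite normrM; apply: le_trans (_ : `|s| * 1 <= _); last by rewrite mulr1.
  apply: ler_wpM2l => //; rewrite ler_norml; lra.
have e1 := expR_le_quad a1; have e2 := expR_le_quad a2.
have := expR_ge1Dx (2 * s ^+ 2).
have hq1 : 0 <= 1 - q by lra.
have m1 := ler_wpM2l q0 e1; have m2 := ler_wpM2l hq1 e2.
rewrite !expr2 in m1 m2 *.
have hss : 0 <= s * s by nra.
have : q * (1 - q) * (s * s) <= s * s by nra.
nra.
Qed.

Lemma mgf n (q : 'I_n -> R) b (s : R) : (forall i, 0 <= q i <= 1) -> `|s| <= 2^-1 ->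
  \sum_e pw q e * expR (s * DD q b e) <= expR (2 * s ^+ 2 * n%:R).
Proof.
move=> hq hs.
pose g (i : 'I_n) (x : bool) := expR (s * ((b i)%:R * (if x then q i - 1 else q i))).
have -> : \sum_e pw q e * expR (s * DD q b e) = \sum_e pw q e * \prod_i g i (e i).
  apply: eq_bigr => e _; congr (_ * _).
  by rewrite /DD mulr_sumr expR_sum.
rewrite pw_fact expRM_natr.
have -> : expR (2 * s ^+ 2) ^+ n = \prod_(i < n) expR (2 * s ^+ 2) by rewrite prodr_const card_ord.
apply: ler_prod => i _; apply/andP; split.
  have := hq i => /andP[h1 h2].
  apply: addr_ge0; apply: mulr_ge0; rewrite ?expR_ge0 //; lra.
rewrite /g; case: (b i); rewrite ?mul1r ?mul0r ?mulr0 ?expR0.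
  exact: factor_bound.
rewrite !mulr1 addrC subrK; apply: expR_ge1; apply: mulr_ge0 => //; exact: sqr_ge0.
Qed.

Lemma expR_sum_pos (x : R) : expR `|x| <= expR x + expR (- x).
Proof.
have := expR_ge0 x; have := expR_ge0 (- x).
case: (lerP 0 x) => hx; [rewrite ger0_norm // | rewrite ltr0_norm //]; lra.
Qed.

Lemma EPhi n (q : 'I_n -> R) b (v : R) : (forall i, 0 <= q i <= 1) ->
  0 <= v <= 4^-1 -> v ^+ 2 * n%:R <= 16^-1 ->
  \sum_e pw q e * expR (v * `|DD q b e|) <= 3.
Proof.
move=> hq /andP[v0 v1] hv.
have hv0 : `|v| <= 2^-1 by rewrite ger0_norm //; lra.
have hv0' : `|- v| <= 2^-1 by rewrite normrN ger0_norm //; lra.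
apply: le_trans (_ : \sum_e pw q e * (expR (v * DD q b e) + expR (- v * DD q b e)) <= _).
  apply: ler_sum => e _; apply: ler_wpM2l; first exact: pw_ge0.
  by have := expR_sum_pos (v * DD q b e); rewrite normrM (ger0_norm v0) mulNr.
under eq_bigr do rewrite mulrDr.
rewrite big_split /=.
have h1 := mgf b hq hv0; have h2 := mgf b hq hv0'.
rewrite sqrrN in h2.
have h3 : expR (2 * v ^+ 2 * n%:R) <= expR (8^-1).
  rewrite ler_expR -mulrA; lra.
have h4 : expR (8^-1 : R) <= 7/6.
  have h : `|8^-1 : R| <= 2^-1 by rewrite ger0_norm; lra.
  apply: le_trans (expR_le_quad h) _; rewrite expr2; lra.
lra.
Qed.

Lemma amgm (a b : R) : expR a * expR b <= (expR (2 * a) + expR (2 * b)) / 2.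
Proof.
rewrite (expRM_natl 2 a) (expRM_natl 2 b) !expr2.
have := sqr_ge0 (expR a - expR b); rewrite expr2; lra.
Qed.

Lemma E2_bound n (q : 'I_n -> R) b b' (v al be : R) : (forall i, 0 <= q i <= 1) ->
  0 <= v <= 4^-1 -> v ^+ 2 * n%:R <= 16^-1 ->
  0 <= al -> 0 <= be -> 2 * al <= v -> 2 * be <= v ->
  \sum_e pw q e * (expR (al * `|DD q b e|) * expR (be * `|DD q b' e|)) <= 3.
Proof.
move=> hq hv hv2 a0 b0 a1 b1.
apply: le_trans (_ : \sum_e pw q e * ((expR (v * `|DD q b e|) + expR (v * `|DD q b' e|)) / 2) <= _).
  apply: ler_sum => e _; apply: ler_wpM2l; first exact: pw_ge0.
  apply: le_trans (amgm _ _) _.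
  rewrite ler_pM2r ?invr_gt0 //.
  apply: lerD; rewrite ler_expR mulrA; apply: ler_wpM2r => //.
under eq_bigr do rewrite mulrA mulrDr.
rewrite -mulr_suml big_split /=.
have h1 := EPhi b hq hv hv2; have h2 := EPhi b' hq hv hv2.
lra.
Qed.

Lemma series_id (rho : R) (N : nat) : rho != 1 ->
  \sum_(j < N) j.+1%:R * rho ^+ j +
    rho ^+ N * (rho / (1 - rho) ^+ 2 + N.+1%:R / (1 - rho)) = ((1 - rho) ^+ 2)^-1.
Proof.
move=> h1; have h2 : 1 - rho != 0 by rewrite subr_eq0 eq_sym.
elim: N => [|N IH].
  rewrite big_ord0 add0r expr0 mul1r; field; rewrite h2 //.
rewrite big_ord_recr /=.
have -> : \sum_(j < N) j.+1%:R * rho ^+ j = ((1 - rho) ^+ 2)^-1 -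
   rho ^+ N * (rho / (1 - rho) ^+ 2 + N.+1%:R / (1 - rho)) by rewrite -{1}IH addrK.
rewrite (exprS rho N) -(addn1 N.+1) -(addn1 N) !natrD; field; rewrite h2 //.
Qed.

Lemma rho_bound : expR (- (16^-1 : R)) <= 16 / 17.
Proof.
rewrite expRN.
have h := expR_ge1Dx (16^-1 : R).
have h0 : 0 < 1 + 16^-1 :> R by lra.
apply: le_trans (_ : (1 + 16^-1)^-1 <= _).
  by rewrite lef_pV2 ?posrE ?expR_gt0.
have -> : (1 + 16^-1 : R) = 17 / 16 by lra.
rewrite invf_div; lra.
Qed.

Lemma series_bound (N : nat) :
  \sum_(j < N) j.+1%:R * expR (- (16^-1 : R)) ^+ j <= 289.
Proof.
set rho := expR _.
have r0 : 0 < rho by exact: expR_gt0.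
have r1 := rho_bound; rewrite -/rho in r1.
have hne : rho != 1 by apply/negP => /eqP h; rewrite h in r1; lra.
have := series_id N hne.
have t0 : 0 <= rho ^+ N * (rho / (1 - rho) ^+ 2 + N.+1%:R / (1 - rho)).
  apply: mulr_ge0; first by apply: exprn_ge0; lra.
  apply: addr_ge0; apply: divr_ge0; rewrite ?exprn_ge0 //; lra.
have t1 : ((1 - rho) ^+ 2)^-1 <= 289.
  have hp : 0 < (1 - rho) ^+ 2 by apply: exprn_gt0; lra.
  rewrite -[X in X <= _]mul1r ler_pdivrMr //.
  have : 17^-1 <= 1 - rho by lra.
  move=> h; have : (17^-1) ^+ 2 <= (1 - rho) ^+ 2.
    by rewrite ler_sqr ?nnegrE //; lra.
  rewrite !expr2; lra.
lra.
Qed.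

Definition ind (P : bool) : R := (P : nat)%:R.
Lemma ind_ge0 P : 0 <= ind P. Proof. by case: P; rewrite /ind. Qed.

Lemma layer (T : finType) (w z : T -> R) (r M : R) :
  (forall b, 0 <= w b) -> (forall b, 0 <= z b) -> 0 < r ->
  (forall k : nat, \sum_(b | z b <= k.+1%:R * r) w b <= k.+1%:R * M) ->
  \sum_b w b * expR (- (z b / (16 * r))) <= 289 * M.
Proof.
move=> w0 z0 r0 hyp.
set rho := expR (- (16^-1 : R)).
have rho0 : 0 <= rho by exact: expR_ge0.
have M0 : 0 <= M.
  have h := hyp 0%N; rewrite !mul1r in h; apply: le_trans h; apply: sumr_ge0 => b _; exact: w0.
pose k b := Num.truncn (z b / r).
pose N := (\sum_b k b).+1.
have step1 : forall b, expR (- (z b / (16 * r))) <=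
    \sum_(j < N) rho ^+ j * ind (z b <= j.+1%:R * r).
  move=> b.
  have zr0 : 0 <= z b / r by apply: divr_ge0 => //; exact: ltW.
  have kb1 : (k b)%:R <= z b / r by rewrite truncn_le.
  have kb2 : z b / r < (k b).+1%:R by exact: truncnS_gt.
  have kbN : (k b < N)%N.
    rewrite /N ltnS (bigD1 b) //=; exact: leq_addr.
  apply: le_trans (_ : rho ^+ (k b) <= _).
    rewrite /rho -expRM_natl ler_expR.
    have -> : z b / (16 * r) = (z b / r) / 16 by rewrite invfM; field; rewrite gt_eqF.
    lra.
  rewrite (bigD1 (Ordinal kbN)) //=.
  have -> : (z b <= (k b).+1%:R * r) = true.
    by apply/idP; rewrite -ler_pdivrMr //; exact: ltW.
  rewrite /ind /= mulr1 lerDl; apply: sumr_ge0 => j _; apply: mulr_ge0.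
    exact: exprn_ge0.
  exact: ind_ge0.
apply: le_trans (_ : \sum_b w b * \sum_(j < N) rho ^+ j * ind (z b <= j.+1%:R * r) <= _).
  by apply: ler_sum => b _; apply: ler_wpM2l.
under eq_bigr do rewrite mulr_sumr.
rewrite exchange_big /=.
apply: le_trans (_ : \sum_(j < N) rho ^+ j * (j.+1%:R * M) <= _).
  apply: ler_sum => j _.
  have -> : \sum_b w b * (rho ^+ j * ind (z b <= j.+1%:R * r)) =
            rho ^+ j * \sum_(b | z b <= j.+1%:R * r) w b.
    rewrite mulr_sumr [RHS]big_mkcond /=; apply: eq_bigr => b _.
    by rewrite /ind; case: (_ <= _); rewrite /= ?mulr1 ?mulr0 // mulrC.
  by apply: ler_wpM2l; [exact: exprn_ge0 | exact: hyp].
have -> : \sum_(j < N) rho ^+ j * (j.+1%:R * M) = (\sum_(j < N) j.+1%:R * rho ^+ j) * M.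
  by rewrite mulr_suml; apply: eq_bigr => j _; rewrite mulrCA mulrA.
apply: ler_wpM2r => //; exact: series_bound.
Qed.

Lemma psumE (T : finType) (P : pred T) (w : T -> R) :
  \sum_(b | P b) w b = \sum_b w b * ind (P b).
Proof.
rewrite big_mkcond /=; apply: eq_bigr => b _; rewrite /ind.
by case: (P b); rewrite /= ?mulr1 ?mulr0.
Qed.

Lemma psum_mono (T : finType) (P Q : pred T) (w : T -> R) :
  (forall b, 0 <= w b) -> (forall b, P b -> Q b) ->
  \sum_(b | P b) w b <= \sum_(b | Q b) w b.
Proof.
move=> w0 hPQ; rewrite (psumE P) (psumE Q); apply: ler_sum => b _; apply: ler_wpM2l; first exact: w0.
rewrite /ind; case hP: (P b); last exact: ind_ge0.
rewrite (hPQ b hP); exact: lexx.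
Qed.

Lemma psum_sub (T : finType) (P Q1 Q2 : pred T) (w : T -> R) :
  (forall b, 0 <= w b) -> (forall b, P b -> Q1 b || Q2 b) ->
  \sum_(b | P b) w b <= \sum_(b | Q1 b) w b + \sum_(b | Q2 b) w b.
Proof.
move=> w0 hPQ; rewrite (psumE P) (psumE Q1) (psumE Q2) -big_split /=; apply: ler_sum => b _.
rewrite -mulrDr; apply: ler_wpM2l; first exact: w0.
rewrite /ind; case hP: (P b); last by apply: addr_ge0; exact: ind_ge0.
have := hPQ b hP; case: (Q1 b); case: (Q2 b) => // _; rewrite /ind /=; lra.
Qed.

Lemma bw_ge0 n (p : R) (b : {ffun 'I_n -> bool}) : 0 <= p <= 1 -> 0 <= bern_weight p b.
Proof. by move=> hp; apply: (@pw_ge0 n (fun _ => p)). Qed.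

Lemma bw_sum1 n (p : R) : \sum_(b : {ffun 'I_n -> bool}) bern_weight p b = 1.
Proof. exact: (@pw_sum1 n (fun _ => p)). Qed.

Lemma pc_ge0 n p (y : 'I_n -> R) lam t : 0 <= p <= 1 -> 0 <= prob_close p y lam t.
Proof. by move=> hp; apply: sumr_ge0 => b _; exact: bw_ge0. Qed.

Lemma pc_le1 n p (y : 'I_n -> R) lam t : 0 <= p <= 1 -> prob_close p y lam t <= 1.
Proof.
move=> hp; rewrite -(bw_sum1 n p) /prob_close.
rewrite [X in _ <= X](bigID (fun b => `|rsum y b - lam| <= t)) /= lerDl.
by apply: sumr_ge0 => b _; exact: bw_ge0.
Qed.

Lemma levy_has_sup n p (y : 'I_n -> R) t : 0 <= p <= 1 ->
  has_sup [set prob_close p y lam t | lam in [set: R]].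
Proof.
move=> hp; split; first by exists (prob_close p y 0 t), 0.
by exists 1 => x [lam _ <-]; exact: pc_le1.
Qed.

Lemma levy_ge n p (y : 'I_n -> R) lam t : 0 <= p <= 1 ->
  prob_close p y lam t <= levy p y t.
Proof.
move=> hp; apply: (sup_upper_bound (levy_has_sup y t hp)).
by exists lam.
Qed.

Lemma levy_cover n p (y : 'I_n -> R) t (k : nat) c : 0 <= p <= 1 -> 0 <= t ->
  prob_close p y c (k.+1%:R * t) <= k.+1%:R * levy p y t.
Proof.
move=> hp t0; elim: k c => [|k IH] c.
  by rewrite !mul1r; exact: levy_ge.
apply: le_trans (_ : prob_close p y (c - t) (k.+1%:R * t) + prob_close p y (c + k.+1%:R * t) t <= _).
  apply: psum_sub => [b|b]; first exact: bw_ge0.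
  rewrite !ler_norml -(addn1 k.+1) natrD => /andP[h1 h2].
  have hk : 0 <= k.+1%:R * t by apply: mulr_ge0.
  case: (lerP (rsum y b) (c + k%:R * t)) => hx.
    apply/orP; left; rewrite -(addn1 k) natrD; apply/andP; split; nra.
  apply/orP; right; rewrite -(addn1 k) natrD; apply/andP; split; nra.
rewrite -(addn1 k.+1) natrD mulrDl mul1r; apply: lerD; first exact: IH.
exact: levy_ge.
Qed.

Lemma bw_gt0 n (p : R) (b : {ffun 'I_n -> bool}) : 0 < p < 1 -> 0 < bern_weight p b.
Proof.
move=> /andP[h1 h2]; apply: prodr_gt0 => i _; case: (b i) => //; lra.
Qed.

Lemma levy_gt0 n p (y : 'I_n -> R) t : 0 < p < 1 -> 0 <= t -> 0 < levy p y t.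
Proof.
move=> hp t0.
have hp' : 0 <= p <= 1 by case/andP: hp => h1 h2; apply/andP; split; lra.
pose b0 : {ffun 'I_n -> bool} := [ffun => false].
apply: lt_le_trans (levy_ge y (rsum y b0) t hp').
apply: lt_le_trans (bw_gt0 b0 hp) _.
rewrite /prob_close (bigD1 b0) /=; last by rewrite subrr normr0.
rewrite lerDl; apply: sumr_ge0 => b _; exact: bw_ge0.
Qed.

Lemma fin_max (T : finType) (x0 : T) (F : T -> R) : exists e, forall x, F x <= F e.
Proof.
case: (@arg_maxP _ R T x0 xpredT F isT) => e _ He; exists e => x; exact: He.
Qed.

Lemma avg_le (T : finType) (w F : T -> R) e0 : (forall x, 0 <= w x) ->
  \sum_x w x = 1 -> (forall x, F x <= F e0) -> \sum_x w x * F x <= F e0.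
Proof.
move=> w0 w1 hF; apply: le_trans (_ : \sum_x w x * F e0 <= _).
  apply: ler_sum => x _; apply: ler_wpM2l; [exact: w0 | exact: hF].
rewrite -mulr_suml w1 mul1r; exact: lexx.
Qed.

Lemma ind_exp (a B u : R) : 0 <= u -> ind (a <= B) <= expR (u * (B - a)).
Proof.
move=> u0; rewrite /ind; case: (lerP a B) => h /=; rewrite ?mulr1n ?mulr0n.
  apply: expR_ge1; apply: mulr_ge0 => //; lra.
exact: expR_ge0.
Qed.

Lemma ind_mono (P Q : bool) : (P -> Q) -> ind P <= ind Q.
Proof.
rewrite /ind; case: P; case: Q => /= h; rewrite ?mulr1n ?mulr0n; try lra.
Qed.

Definition qq n (y : 'I_n -> R) i := y i - (Num.floor (y i))%:~R.
Definition yp n (y : 'I_n -> R) (e : {ffun 'I_n -> bool}) i : int :=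
  Num.floor (y i) + ((e i : nat))%:Z.

Lemma qq_range n (y : 'I_n -> R) i : 0 <= qq y i <= 1.
Proof.
rewrite /qq; have h1 := floor_le (y i); have h2 := floorD1_gt (y i).
rewrite intrD in h2; apply/andP; split; lra.
Qed.

Lemma yp_val n (y : 'I_n -> R) e i : (yp y e i)%:~R = y i - dd (qq y) e i.
Proof.
rewrite /yp /dd /qq intrD; case: (e i) => /=; lra.
Qed.

Lemma dd_abs n (y : 'I_n -> R) e i : `|dd (qq y) e i| <= 1.
Proof.
have := qq_range y i; rewrite /dd ler_norml; case: (e i) => /andP[h1 h2]; apply/andP; split; lra.
Qed.

Lemma rsum_shift n (y : 'I_n -> R) e b :
  rsum (fun i => (yp y e i)%:~R) b = rsum y b - DD (qq y) b e.
Proof.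
rewrite /rsum /DD -sumrB; apply: eq_bigr => i _; rewrite yp_val; ring.
Qed.

Lemma sum_shift n (y : 'I_n -> R) e :
  \sum_(i < n) y i - \sum_(i < n) (yp y e i)%:~R = DD (qq y) [ffun => true] e.
Proof.
rewrite /DD -sumrB; apply: eq_bigr => i _; rewrite yp_val ffunE /=; ring.
Qed.

Lemma sum_prod_bound (T1 T2 E : finType) (pe : E -> R) (w1 : T1 -> R) (w2 : T2 -> R)
  (I1 : T1 -> E -> R) (I2 : T2 -> E -> R) (G1 : T1 -> R) (G2 : T2 -> R)
  (H : T1 -> T2 -> E -> R) :
  (forall e, 0 <= pe e) -> (forall b, 0 <= w1 b) -> (forall b, 0 <= w2 b) ->
  (forall b, 0 <= G1 b) -> (forall b, 0 <= G2 b) ->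
  (forall b b' e, I1 b e * I2 b' e <= G1 b * G2 b' * H b b' e) ->
  (forall b b', \sum_e pe e * H b b' e <= 3) ->
  \sum_e pe e * ((\sum_b w1 b * I1 b e) * (\sum_b w2 b * I2 b e)) <=
    3 * (\sum_b w1 b * G1 b) * (\sum_b w2 b * G2 b).
Proof.
move=> pe0 w10 w20 G10 G20 hI hH.
pose K b b' := (w1 b * G1 b) * (w2 b' * G2 b').
apply: le_trans (_ : \sum_e pe e * (\sum_b \sum_b' K b b' * H b b' e) <= _).
  apply: ler_sum => e _; apply: ler_wpM2l; first exact: pe0.
  rewrite mulr_suml; apply: ler_sum => b _; rewrite mulr_sumr; apply: ler_sum => b' _.
  have -> : w1 b * I1 b e * (w2 b' * I2 b' e) = (w1 b * w2 b') * (I1 b e * I2 b' e) by ring.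
  have -> : K b b' * H b b' e = (w1 b * w2 b') * (G1 b * G2 b' * H b b' e) by rewrite /K; ring.
  apply: ler_wpM2l; [exact: mulr_ge0 | exact: hI].
have -> : \sum_e pe e * (\sum_b \sum_b' K b b' * H b b' e) =
          \sum_b \sum_b' K b b' * (\sum_e pe e * H b b' e).
  rewrite (eq_bigr (fun e => \sum_b \sum_b' pe e * (K b b' * H b b' e))); last first.
    by move=> e _; rewrite mulr_sumr; apply: eq_bigr => b _; rewrite mulr_sumr.
  rewrite exchange_big; apply: eq_bigr => b _; rewrite exchange_big.
  apply: eq_bigr => b' _; rewrite mulr_sumr; apply: eq_bigr => e _; ring.
apply: le_trans (_ : \sum_b \sum_b' K b b' * 3 <= _).
  apply: ler_sum => b _; apply: ler_sum => b' _; apply: ler_wpM2l; last exact: hH.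
  by apply: mulr_ge0; apply: mulr_ge0.
rewrite -mulrA big_distrlr /= mulrC mulr_suml; apply: ler_sum => b _.
rewrite mulr_suml; apply: ler_sum => b' _; rewrite /K; exact: lexx.
Qed.

Lemma sum_one_bound (T1 E : finType) (pe : E -> R) (w1 : T1 -> R)
  (I1 : T1 -> E -> R) (Z : E -> R) (G1 : T1 -> R) (H : T1 -> E -> R) :
  (forall e, 0 <= pe e) -> (forall b, 0 <= w1 b) -> (forall b, 0 <= G1 b) ->
  (forall b e, I1 b e * Z e <= G1 b * H b e) ->
  (forall b, \sum_e pe e * H b e <= 3) ->
  \sum_e pe e * ((\sum_b w1 b * I1 b e) * Z e) <= 3 * (\sum_b w1 b * G1 b).
Proof.
move=> pe0 w10 G10 hI hH.
apply: le_trans (_ : \sum_e pe e * (\sum_b (w1 b * G1 b) * H b e) <= _).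
  apply: ler_sum => e _; apply: ler_wpM2l; first exact: pe0.
  rewrite mulr_suml; apply: ler_sum => b _; rewrite -mulrA -mulrA.
  apply: ler_wpM2l; [exact: w10 | exact: hI].
have -> : \sum_e pe e * (\sum_b (w1 b * G1 b) * H b e) =
          \sum_b (w1 b * G1 b) * (\sum_e pe e * H b e).
  rewrite (eq_bigr (fun e => \sum_b pe e * ((w1 b * G1 b) * H b e))); last first.
    by move=> e _; rewrite mulr_sumr.
  rewrite exchange_big; apply: eq_bigr => b _; rewrite mulr_sumr; apply: eq_bigr => e _; ring.
rewrite mulr_sumr; apply: ler_sum => b _; rewrite mulrC; apply: ler_wpM2r; last exact: hH.
exact: mulr_ge0.
Qed.

Lemma swap_sum (T1 E : finType) (pe : E -> R) (f : T1 -> E -> R) :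
  \sum_e pe e * (\sum_b f b e) = \sum_b \sum_e pe e * f b e.
Proof.
rewrite (eq_bigr (fun e => \sum_b pe e * f b e)); last by move=> e _; rewrite mulr_sumr.
exact: exchange_big.
Qed.
Definition E1 : R := expR (33 / 16).
Definition K0 : R := 3 * E1 * 289 * 290.
Definition AA : R := 3 * K0.
Definition Cst : R := 2 + 32 * AA.
Definition cst : R := 198^-1.

Lemma AA_gt0 : 0 < AA.
Proof. rewrite /AA /K0 /E1; have := expR_gt0 (33/16 : R); nra. Qed.


Lemma pb1 (S Dv ls r u : R) : 0 < r -> u = (16 * r)^-1 ->
  ind (`|S - Dv - ls| <= 33 * r) <=
  E1 * expR (- (`|S - ls| / (16 * r))) * expR (u * `|Dv|).
Proof.
move=> r0 hu.
apply: le_trans (_ : ind (`|S - ls| <= 33 * r + `|Dv|) <= _).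
  apply: ind_mono => h.
  have : `|S - ls| <= `|S - Dv - ls| + `|Dv|.
    have -> : S - ls = (S - Dv - ls) + Dv by ring.
    exact: ler_normD.
  lra.
have u0 : 0 <= u by rewrite hu invr_ge0; lra.
apply: le_trans (ind_exp _ _ u0) _.
rewrite /E1 -!expRD; rewrite le_eqVlt; apply/orP; left; apply/eqP; congr expR.
rewrite hu; field; rewrite gt_eqF //; lra.
Qed.

Lemma pb2 (S Dv l r u : R) : 0 < r -> u = (16 * r)^-1 ->
  ind (`|S - l| <= 2 * `|Dv|) <= expR (- (`|S - l| / (16 * r))) * expR ((2 * u) * `|Dv|).
Proof.
move=> r0 hu.
have u0 : 0 <= u by rewrite hu invr_ge0; lra.
apply: le_trans (ind_exp _ _ u0) _.
rewrite -!expRD; rewrite le_eqVlt; apply/orP; left; apply/eqP; congr expR.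
rewrite hu; field; rewrite gt_eqF //; lra.
Qed.

Lemma pb0 (S Dv ls r v : R) : 0 < r -> v = (4 * r)^-1 ->
  ind (`|S - ls| <= r) * (1 - expR (v * `|Dv|) * expR (- 8)) <= ind (`|S - Dv - ls| <= 33 * r).
Proof.
move=> r0 hv.
rewrite {1}/ind; case: (lerP `|S - ls| r) => h1 /=; rewrite ?mul0r ?mulr0n ?mul1r ?mulr1n;
  last exact: ind_ge0.
case: (lerP `|Dv| (32 * r)) => h2.
  have h3 : `|S - Dv - ls| <= 33 * r.
    have -> : S - Dv - ls = (S - ls) - Dv by ring.
    apply: le_trans (ler_normB _ _) _; lra.
  rewrite /ind h3 /= mulr1n.
  have := mulr_ge0 (expR_ge0 (v * `|Dv|)) (expR_ge0 (- 8)); lra.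
have h4 : 8 <= v * `|Dv|.
  have e8 : v * (32 * r) = 8 by rewrite hv; field; rewrite gt_eqF //; lra.
  have v0 : 0 <= v by rewrite hv invr_ge0; lra.
  rewrite -e8; apply: ler_wpM2l => //; exact: ltW.
have h5 : 1 <= expR (v * `|Dv|) * expR (- 8).
  rewrite -expRD; apply: expR_ge1; lra.
have := ind_ge0 (`|S - Dv - ls| <= 33 * r); lra.
Qed.


Lemma main_pos n p (y : 'I_n -> R) L lam : (0 < n)%N -> 0 < p -> p <= 2^-1 -> 0 < L ->
  (forall t, Num.sqrt n%:R <= t -> prob_close p y lam t <= L * t) ->
  exists e,
   [/\ forall t, Num.sqrt n%:R <= t ->
         prob_close p (fun i => (yp y e i)%:~R) lam t <= Cst * L * t,
       cst * levy p y (Num.sqrt n%:R) <= levy p (fun i => (yp y e i)%:~R) (Num.sqrt n%:R) &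
       `|DD (qq y) [ffun => true] e| <= Cst * Num.sqrt n%:R].
Proof.
move=> n0 p0 p1 L0 hyp.
set r := Num.sqrt n%:R.
have n1 : 1 <= n%:R :> R by rewrite ler1n.
have r1 : 1 <= r.
  by apply: le_trans (_ : Num.sqrt 1 <= r); [rewrite sqrtr1; exact: lexx | exact: ler_wsqrtr].
have r0 : 0 < r by lra.
have rr : r ^+ 2 = n%:R by rewrite /r sqr_sqrtr // ler0n.
pose q := qq y.
have hq : forall i, 0 <= q i <= 1 by move=> i; exact: qq_range.
pose v := (4 * r)^-1.
pose u := (16 * r)^-1.
have hv : 0 <= v <= 4^-1.
  apply/andP; split; first by rewrite invr_ge0; lra.
  by rewrite lef_pV2 ?posrE; lra.
have hv2 : v ^+ 2 * n%:R <= 16^-1.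
  have -> : v ^+ 2 * n%:R = 16^-1 by rewrite -rr /v; field; rewrite gt_eqF.
  exact: lexx.
have hp : 0 <= p <= 1 by apply/andP; split; lra.
have hp' : 0 < p < 1 by apply/andP; split; lra.
pose w := fun b : {ffun 'I_n -> bool} => bern_weight p b.
have hw0 : forall b, 0 <= w b by move=> b; exact: bw_ge0.
have hpw0 : forall e, 0 <= pw q e by move=> e; exact: pw_ge0.
pose mu := levy p y r.
have mu0 : 0 < mu by apply: levy_gt0 => //; lra.
have [lams hm] : exists lams, mu / 2 < prob_close p y lams r.
  have e0 : 0 < mu / 2 by lra.
  case: (sup_adherent e0 (levy_has_sup y r hp)) => x [l _ <-] hx.
  exists l; have : levy p y r - mu / 2 < prob_close p y l r := hx.
  rewrite -/mu; lra.
pose m := prob_close p y lams r.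
rewrite -/m in hm.
pose X e := prob_close p (fun i => (yp y e i)%:~R) lams (33 * r).
pose T e := \sum_(b | `|rsum y b - lam| <= 2 * `|DD q b e|) w b.
pose one : {ffun 'I_n -> bool} := [ffun => true].
pose Z e := expR (u * `|DD q one e|).
pose Y e := T e / (L * r) + Z e.
pose es b := expR (- (`|rsum y b - lams| / (16 * r))).
pose el b := expR (- (`|rsum y b - lam| / (16 * r))).
have hLs : \sum_b w b * es b <= 289 * mu.
  apply: (layer (z := fun b => `|rsum y b - lams|)) => //.
  move=> k; have := levy_cover y k lams hp (ltW r0); rewrite /prob_close; exact.
have hLl : \sum_b w b * el b <= 289 * (L * r).
  apply: (layer (z := fun b => `|rsum y b - lam|)) => //.
  move=> k; have hk : r <= k.+1%:R * r.
    by rewrite ler_pMl // ler1n.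
  have := hyp _ hk; rewrite mulrCA; exact.
have XE : forall e, X e = \sum_b w b * ind (`|rsum y b - DD q b e - lams| <= 33 * r).
  by move=> e; rewrite /X /prob_close psumE; apply: eq_bigr => b _; rewrite rsum_shift.
have TE : forall e, T e = \sum_b w b * ind (`|rsum y b - lam| <= 2 * `|DD q b e|).
  by move=> e; rewrite /T psumE.
have mE : m = \sum_b w b * ind (`|rsum y b - lams| <= r).
  by rewrite /m /prob_close psumE.
have e8 : expR (- 8) <= 9^-1 :> R.
  have p9 : (9:R) \is Num.pos by rewrite posrE; lra.
  have pe : expR (8:R) \is Num.pos by rewrite posrE expR_gt0.
  rewrite expRN (lef_pV2 pe p9).
  have := expR_ge1Dx (8 : R); lra.
have uv : v = 4 * u.
  rewrite /u /v; field; rewrite gt_eqF //.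
have u0 : 0 <= u by rewrite /u invr_ge0; lra.
have hu1 : 0 <= 2 * u by lra.
have hu2 : 2 * u <= v by lra.
have hu3 : 2 * (2 * u) <= v by lra.
have hEX : 2 / 3 * m <= \sum_e pw q e * X e.
  apply: le_trans (_ : \sum_e pw q e * (\sum_b w b * (ind (`|rsum y b - lams| <= r) *
      (1 - expR (v * `|DD q b e|) * expR (- 8)))) <= _); last first.
    apply: ler_sum => e _; apply: ler_wpM2l; first exact: hpw0.
    rewrite XE; apply: ler_sum => b _; apply: ler_wpM2l; first exact: hw0.
    exact: pb0.
  rewrite swap_sum mE mulr_sumr; apply: ler_sum => b _.
  set c := w b * ind (`|rsum y b - lams| <= r).
  have c0 : 0 <= c by apply: mulr_ge0; [exact: hw0 | exact: ind_ge0].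
  have -> : \sum_e pw q e * (w b * (ind (`|rsum y b - lams| <= r) *
      (1 - expR (v * `|DD q b e|) * expR (- 8)))) =
      c * (\sum_e pw q e) - c * expR (- 8) * (\sum_e pw q e * expR (v * `|DD q b e|)).
    rewrite !mulr_sumr -sumrB; apply: eq_bigr => e _; rewrite /c; ring.
  rewrite pw_sum1.
  have h3 := EPhi b hq hv hv2.
  have h8 : 0 <= expR (- 8) := expR_ge0 _.
  have h4 : 0 <= \sum_e pw q e * expR (v * `|DD q b e|).
    by apply: sumr_ge0 => e _; apply: mulr_ge0; [exact: hpw0 | exact: expR_ge0].
  have hks : expR (- 8) * (\sum_e pw q e * expR (v * `|DD q b e|)) <= 3^-1 by nra.
  have := ler_wpM2l c0 hks; rewrite -mulrA; lra.
have hEXT : \sum_e pw q e * (X e * T e) <=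
    3 * (\sum_b w b * (E1 * es b)) * (\sum_b w b * el b).
  under eq_bigr do rewrite XE TE.
  apply: (sum_prod_bound (H := fun b b' e => expR (u * `|DD q b e|) * expR ((2 * u) * `|DD q b' e|))).
  - exact: hpw0.
  - exact: hw0.
  - exact: hw0.
  - by move=> b; apply: mulr_ge0; [exact: expR_ge0 | exact: expR_ge0].
  - by move=> b; exact: expR_ge0.
  - move=> b b' e.
    have h1 := pb1 (rsum y b) (DD q b e) lams r0 (erefl u).
    have h2 := pb2 (rsum y b') (DD q b' e) lam r0 (erefl u).
    apply: le_trans (ler_pM (ind_ge0 _) (ind_ge0 _) h1 h2) _.
    rewrite /es /el le_eqVlt; apply/orP; left; apply/eqP; ring.
  - move=> b b'; exact: (E2_bound b b' hq hv hv2 u0 hu1 hu2 hu3).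
have hEXZ : \sum_e pw q e * (X e * Z e) <= 3 * (\sum_b w b * (E1 * es b)).
  under eq_bigr do rewrite XE.
  apply: (sum_one_bound (H := fun b e => expR (u * `|DD q b e|) * expR (u * `|DD q one e|))).
  - exact: hpw0.
  - exact: hw0.
  - by move=> b; apply: mulr_ge0; [exact: expR_ge0 | exact: expR_ge0].
  - move=> b e.
    have h1 := pb1 (rsum y b) (DD q b e) lams r0 (erefl u).
    apply: le_trans (ler_wpM2r (expR_ge0 _) h1) _.
    rewrite /es /Z le_eqVlt; apply/orP; left; apply/eqP; ring.
  - move=> b; exact: (E2_bound b one hq hv hv2 u0 u0 hu2 hu2).
clear XE TE mE e8 hq hv hv2 n1 rr hp' hu1 hu2 hu3.
pose Ls := \sum_b w b * es b.
pose Ll := \sum_b w b * el b.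
have hE1 : 0 < E1 by exact: expR_gt0.
have AA0 := AA_gt0.
have hLs' : \sum_b w b * (E1 * es b) = E1 * Ls.
  by rewrite /Ls mulr_sumr; apply: eq_bigr => b _; ring.
rewrite hLs' in hEXT hEXZ; rewrite -/Ll in hEXT hLl; rewrite -/Ls in hLs.
have Ls0 : 0 <= Ls by apply: sumr_ge0 => b _; apply: mulr_ge0; [exact: hw0 | exact: expR_ge0].
have Lr0 : 0 < L * r by apply: mulr_gt0.
pose EX := \sum_e pw q e * X e.
rewrite -/EX in hEX.
pose EXT := \sum_e pw q e * (X e * T e).
pose EXZ := \sum_e pw q e * (X e * Z e).
rewrite -/EXZ in hEXZ.
have f1 : EXT / (L * r) <= 3 * (E1 * Ls) * 289.
  rewrite ler_pdivrMr //; apply: le_trans hEXT _.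
  have c0 : 0 <= E1 * Ls by apply: mulr_ge0 => //; exact: ltW.
  have := ler_wpM2l c0 hLl; lra.
have f3 : E1 * Ls <= E1 * (289 * mu) by apply: ler_wpM2l; [exact: ltW | exact: hLs].
have K00 : 0 < K0 by rewrite /K0; apply: mulr_gt0 => //; apply: mulr_gt0 => //; apply: mulr_gt0 => //; lra.
have f4 : K0 * mu < K0 * (3 * EX) by rewrite ltr_pM2l //; lra.
pose F e := X e * (2 * AA - Y e).
have FE : \sum_e pw q e * F e = 2 * AA * EX - EXT / (L * r) - EXZ.
  rewrite /F /Y /EX /EXT /EXZ mulr_sumr mulr_suml -!sumrB.
  by apply: eq_bigr => e _; ring.
have hF : AA * mu / 3 < \sum_e pw q e * F e.
  rewrite FE.
  have hK : K0 * mu = 3 * 289 * 290 * (E1 * mu) by rewrite /K0; ring.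
  have hA1 : AA * EX = 3 * (K0 * EX) by rewrite /AA; ring.
  have hA2 : AA * mu = 3 * (K0 * mu) by rewrite /AA; ring.
  have hE : E1 * (289 * mu) = 289 * (E1 * mu) by ring.
  lra.
have [e0 he0] := fin_max one F.
have hF0 : AA * mu / 3 < F e0.
  apply: lt_le_trans hF _; apply: avg_le => //; exact: pw_sum1.
clear hF FE f1 f3 f4 K00 hEX hEXT hEXZ hLs hLl Ls0 hLs' he0.
have X0 : 0 <= X e0 by exact: pc_ge0.
have T0 : 0 <= T e0 by apply: sumr_ge0 => b _; exact: hw0.
have Z0 : 0 <= Z e0 by exact: expR_ge0.
have TY : T e0 / (L * r) <= Y e0 by rewrite /Y; lra.
have Amu : 0 < AA * mu by apply: mulr_gt0.
have hY : Y e0 < 2 * AA.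
  rewrite ltNge; apply/negP => hc.
  have : X e0 * (2 * AA - Y e0) <= 0 by apply: mulr_ge0_le0 => //; lra.
  rewrite /F in hF0; lra.
have hX : mu / 6 < X e0.
  rewrite ltNge; apply/negP => hc.
  have : X e0 * Y e0 >= 0 by apply: mulr_ge0 => //; rewrite /Y; apply: addr_ge0 => //; apply: divr_ge0 => //; exact: ltW.
  have : AA * X e0 <= AA * (mu / 6) by apply: ler_wpM2l => //; exact: ltW.
  rewrite /F in hF0; nra.
exists e0; split.
- move=> t ht.
  have t0 : 0 < t by lra.
  apply: le_trans (_ : prob_close p y lam (2 * t) + T e0 <= _).
    apply: psum_sub => [b|b]; first exact: hw0.
    rewrite rsum_shift => h.
    case: (lerP `|DD q b e0| t) => hD.
      apply/orP; left.
      have : `|rsum y b - lam| <= `|rsum y b - DD q b e0 - lam| + `|DD q b e0|.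
        have -> : rsum y b - lam = (rsum y b - DD q b e0 - lam) + DD q b e0 by ring.
        exact: ler_normD.
      lra.
    apply/orP; right.
    have : `|rsum y b - lam| <= `|rsum y b - DD q b e0 - lam| + `|DD q b e0|.
      have -> : rsum y b - lam = (rsum y b - DD q b e0 - lam) + DD q b e0 by ring.
      exact: ler_normD.
    lra.
  have h2t : prob_close p y lam (2 * t) <= L * (2 * t) by apply: hyp; rewrite -/r; lra.
  have hT : T e0 <= Y e0 * (L * r) by rewrite -ler_pdivrMr.
  have hT2 : Y e0 * (L * r) <= 2 * AA * (L * t).
    apply: le_trans (_ : 2 * AA * (L * r) <= _).
      by apply: ler_wpM2r; [exact: ltW | exact: ltW].
    apply: ler_wpM2l; first lra.
    by apply: ler_wpM2l; [exact: ltW | exact: ht].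
  have Lt0 : 0 <= L * t by apply: mulr_ge0; lra.
  rewrite /Cst; nra.
- have := levy_cover (fun i => (yp y e0 i)%:~R) 32 lams hp (ltW r0).
  have -> : prob_close p (fun i => (yp y e0 i)%:~R) lams (32.+1%:R * r) = X e0 by [].
  rewrite /cst -/mu; lra.
- rewrite -/q -/one.
  have hz : u * `|DD q one e0| <= Z e0.
    have := expR_ge1Dx (u * `|DD q one e0|); rewrite /Z; lra.
  have hT' : 0 <= T e0 / (L * r) by apply: divr_ge0 => //; exact: ltW.
  have hu : `|DD q one e0| = (u * `|DD q one e0|) * (16 * r).
    by rewrite /u; field; rewrite gt_eqF.
  rewrite hu.
  have : u * `|DD q one e0| < 2 * AA by rewrite /Y in hY; lra.
  move=> h; rewrite /Cst.
  have : u * `|DD q one e0| * (16 * r) <= 2 * AA * (16 * r).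
    by apply: ler_wpM2r; [lra | exact: ltW].
  nra.
Qed.

Theorem lemma5p2 :
  exists C c : Rdefinitions.R, 0 < C /\ 0 < c /\
  forall (n : nat) (p : Rdefinitions.R) (y : 'I_n -> Rdefinitions.R)
         (L lam : Rdefinitions.R),
    0 < p -> p <= 2^-1 -> 0 < L ->
    (forall t : Rdefinitions.R, Num.sqrt n%:R <= t -> prob_close p y lam t <= L * t) ->
    exists y' : 'I_n -> int,
      (forall i : 'I_n, `|y i - (y' i)%:~R| <= 1) /\
      (forall t : Rdefinitions.R, Num.sqrt n%:R <= t ->
          prob_close p (fun i => (y' i)%:~R) lam t <= C * L * t) /\
      levy p (fun i => (y' i)%:~R) (Num.sqrt n%:R) >= c * levy p y (Num.sqrt n%:R) /\
      `|\sum_(i < n) y i - \sum_(i < n) (y' i)%:~R| <= C * Num.sqrt n%:R.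
Proof.
have AA0 := AA_gt0.
exists Cst, cst; split; first by rewrite /Cst; lra.
split; first by rewrite /cst invr_gt0; lra.
move=> n p y L lam p0 p1 L0 hyp.
case: n y hyp => [|n] y hyp.
  exists (fun _ => 0%Z).
  have hy : y = (fun i => (0%Z : int)%:~R) by apply: funext => -[].
  subst y.
  split; first by move=> [].
  split.
    move=> t ht; apply: le_trans (hyp t ht) _.
    have t0 : 0 <= t by apply: le_trans ht; exact: sqrtr_ge0.
    have : 0 <= L * t by apply: mulr_ge0 => //; exact: ltW.
    rewrite /Cst; nra.
  split.
    have hp : 0 <= p <= 1 by apply/andP; split; lra.
    have := levy_gt0 (fun i : 'I_0 => (0%Z : int)%:~R) (t := Num.sqrt 0%:R) (p := p).
    rewrite /cst; move=> h.
    have hl : 0 <= levy p (fun i : 'I_0 => (0%Z : int)%:~R) (Num.sqrt 0%:R).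
      by apply: ltW; apply: h; [apply/andP; split; lra | exact: sqrtr_ge0].
    have : 198^-1 * levy p (fun i : 'I_0 => (0%Z : int)%:~R) (Num.sqrt 0%:R) <=
        levy p (fun i : 'I_0 => (0%Z : int)%:~R) (Num.sqrt 0%:R) by lra.
    exact.
  rewrite !big_ord0 subrr normr0; apply: mulr_ge0; [rewrite /Cst; lra | exact: sqrtr_ge0].
have [e [h2 h3 h4]] := main_pos (y := y) (lam := lam) (ltn0Sn n) p0 p1 L0 hyp.
exists (yp y e); split.
  move=> i; have -> : y i - (yp y e i)%:~R = dd (qq y) e i by rewrite yp_val; ring.
  exact: dd_abs.
split; first exact: h2.
split; first exact: h3.
by rewrite sum_shift.
Qed.
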